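(* Let $X$ be an extremally disconnected topological space satisfying $S_{fin}(s\mathcal{O},s\mathcal{O})$ (i.e. $X$ is semi-Menger). Then Alice (the first player) does not have a winning strategy in the game $G_{fin}(s\mathcal{O},s\mathcal{O})$ played on $X$.
   Context: A subset $A$ of a topological space $X$ is semi-open if $A\subseteq \mathrm{Cl}(\mathrm{Int}(A))$. A semi-open cover of $X$ is a cover of $X$ by semi-open sets; $s\mathcal{O}$ denotes the collection of all semi-open covers of $X$. A space is extremally disconnected if the closure of every open set is open. $X$ satisfies $S_{fin}(s\mathcal{O},s\mathcal{O})$ (is semi-Menger) if for each sequence $\langle\mathcal{U}_n:n\in\omega\rangle$ of semi-open covers of $X$ there is a sequence $\langle\mathcal{V}_n:n\in\omega\rangle$ such that each $\mathcal{V}_n$ is a finite subset of $\mathcal{U}_n$ and $\bigcup_{n}\mathcal{V}_n$ covers $X$. The game $G_{fin}(s\mathcal{O},s\mathcal{O})$ is played by Alice and Bob in innings $n\in\omega$: in inning $n$ Alice chooses a semi-open cover $\mathcal{U}_n$ of $X$ and Bob chooses a finite subset $\mathcal{V}_n\subseteq\mathcal{U}_n$. Bob wins the play if $\bigcup_n\bigcup\mathcal{V}_n=X$; otherwise Alice wins. A strategy for Alice is a rule assigning to each finite sequence of Bob's previous moves a semi-open cover of $X$; it is winning if Alice wins every play in which she follows it. *)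

(* Defs.v *)
From mathcomp Require Import all_boot all_classical all_reals all_analysis.
Set Implicit Arguments. Unset Strict Implicit. Unset Printing Implicit Defensive.
Local Open Scope classical_set_scope.

Definition semi_open {X : topologicalType} (A : set X) : Prop :=
  A `<=` closure (interior A).

Definition semi_open_cover {X : topologicalType} (U : set (set X)) : Prop :=
  (forall A, U A -> semi_open A) /\ \bigcup_(A in U) A = [set: X].

Definition extremally_disconnected (X : topologicalType) : Prop :=
  forall A : set X, open A -> open (closure A).

(* S_fin(sO, sO): finite subsets are represented by finite sequences. *)
Definition semi_Menger (X : topologicalType) : Prop :=
  forall U : nat -> set (set X), (forall n, semi_open_cover (U n)) ->
  exists V : nat -> seq (set X),
    (forall n A, A \in V n -> U n A) /\
    \bigcup_n (\bigcup_(A in [set B | B \in V n]) A) = [set: X].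

(* A strategy for Alice: to each finite sequence of Bob's previous moves
   (finite families of sets) she assigns a semi-open cover. *)
Definition alice_strategy (X : topologicalType) :=
  seq (seq (set X)) -> set (set X).

Definition is_alice_strategy {X : topologicalType} (sigma : alice_strategy X)
  : Prop := forall h, semi_open_cover (sigma h).

Definition follows {X : topologicalType} (sigma : alice_strategy X)
  (V : nat -> seq (set X)) : Prop :=
  forall n A, A \in V n -> sigma (mkseq V n) A.

Definition bob_wins {X : topologicalType} (V : nat -> seq (set X)) : Prop :=
  \bigcup_n (\bigcup_(A in [set B | B \in V n]) A) = [set: X].

Definition alice_winning_strategy {X : topologicalType}
  (sigma : alice_strategy X) : Prop :=
  is_alice_strategy sigma /\ forall V, follows sigma V -> ~ bob_wins V.

(* Main.v *)
Require Import Defs.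
From mathcomp Require Import all_boot all_classical all_reals all_analysis.
Local Open Scope classical_set_scope.

Section S.
Context {X : topologicalType}.

Lemma open_closure_meet (O H : set X) : open O -> O `&` closure H `<=` closure (O `&` H).
Proof.
move=> oO x [Ox cHx] B Bx.
have nO : nbhs x O by apply: open_nbhs_nbhs; split.
have [y [Hy [By Oy]]] := cHx _ (filterI Bx nO).
by exists y.
Qed.

Lemma ED_closureI (G H : set X) : extremally_disconnected X -> open G -> open H ->
  closure G `&` closure H `<=` closure (G `&` H).
Proof.
move=> ED oG oH x [cG cH].
have h1 : closure G `&` closure H `<=` closure (closure G `&` H)
  by apply: open_closure_meet; exact: ED.
have h2 : closure (closure G `&` H) `<=` closure (closure (G `&` H)).
  apply: closureS => y [cGy Hy].
  have := @open_closure_meet H G oH y (conj Hy cGy). by rewrite setIC.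
move: (h2 _ (h1 _ (conj cG cH))).
have e : closure (G `&` H) = closure (closure (G `&` H)).
  by apply/closure_id; exact: closed_closure.
by rewrite -e.
Qed.

Lemma semi_openI (A B : set X) : extremally_disconnected X -> semi_open A -> semi_open B ->
  semi_open (A `&` B).
Proof.
move=> ED sA sB x [Ax Bx]; rewrite /semi_open interiorI.
apply: ED_closureI => //; [exact: open_interior|exact: open_interior|].
by split; [exact: sA|exact: sB].
Qed.

Lemma semi_openU (I : Type) (D : set I) (F : I -> set X) : (forall i, D i -> semi_open (F i)) ->
  semi_open (\bigcup_(i in D) F i).
Proof.
move=> sF x [i Di Fx].
apply: (closureS (A := (F i)°)); first by apply: interiorS => y Fy; exists i.
exact: sF.
Qed.

Lemma semi_openT : semi_open (@setT X).
Proof. by rewrite /semi_open interiorT; exact: subset_closure. Qed.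

Fixpoint R (L : seq (seq (set X)) -> nat -> seq (set X)) h k : seq (set X) :=
  match k with 0 => L h 0 | k'.+1 => R L h k' ++ L h k'.+1 end.

Definition W L h k : set X := \bigcup_(A in [set B | B \in R L h k]) A.

Fixpoint capn (c : nat) (f : nat -> set X) : set X :=
  match c with 0 => setT | c'.+1 => capn c' f `&` f c' end.

Fixpoint G L d h k : set X :=
  match d with
  | 0 => W L h k
  | d'.+1 => \bigcup_(c in setT) (W L h c `&` capn c (fun j => G L d' (rcons h (R L h j)) k))
  end.

Lemma R_mono L h k k' A : (k <= k')%N -> A \in R L h k -> A \in R L h k'.
Proof.
move=> /subnKC <-; elim: (k' - k)%N => [|n IH]; first by rewrite addn0.
by move=> /IH; rewrite addnS /= mem_cat => ->.
Qed.

Lemma W_mono L h k k' : (k <= k')%N -> W L h k `<=` W L h k'.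
Proof. by move=> kk x [A /= AR Ax]; exists A => //=; exact: R_mono AR. Qed.

Lemma R_in L h k A : A \in R L h k -> exists n, A \in L h n.
Proof.
elim: k => [|k IH] /=; first by exists 0%N.
by rewrite mem_cat => /orP [/IH //|]; exists k.+1.
Qed.

Lemma L_in_R L h n A : A \in L h n -> A \in R L h n.
Proof. by case: n => [|n] //= H; rewrite mem_cat H orbT. Qed.

Lemma capnP c f x : capn c f x <-> (forall j, (j < c)%N -> f j x).
Proof.
elim: c => [|c IH] /=; first by split.
split.
  by move=> [/IH H fx] j; rewrite ltnS leq_eqVlt => /orP [/eqP -> //|/H].
move=> H; split; last exact: H.
by apply/IH => j jc; apply: H; exact: ltnW.
Qed.

Lemma semi_open_capn c f : extremally_disconnected X ->
  (forall j, (j < c)%N -> semi_open (f j)) -> semi_open (capn c f).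
Proof.
move=> ED; elim: c => [|c IH] H /=; first exact: semi_openT.
apply: semi_openI => //; last exact: H.
by apply: IH => j jc; apply: H; exact: ltnW.
Qed.


Definition Lgood (sigma : alice_strategy X) (L : seq (seq (set X)) -> nat -> seq (set X)) :=
  (forall h n A, A \in L h n -> sigma h A) /\
  (forall h, \bigcup_n (\bigcup_(A in [set B | B \in L h n]) A) = [set: X]).

Lemma W_cov sigma L h x : Lgood sigma L -> exists k, W L h k x.
Proof.
move=> [_ Lc]; have : [set: X] x by [].
rewrite -(Lc h) => -[n _ [A /= AL Ax]].
by exists n, A => //; exact: L_in_R.
Qed.

Lemma W_so sigma L h k : is_alice_strategy sigma -> Lgood sigma L -> semi_open (W L h k).
Proof.
move=> sig [Li _]; apply: semi_openU => A /= /R_in [n /Li].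
exact: (proj1 (sig h)).
Qed.

Lemma G_so sigma L d h k : extremally_disconnected X ->
  is_alice_strategy sigma -> Lgood sigma L -> semi_open (G L d h k).
Proof.
move=> ED sig Lg; elim: d h => [|d IH] h /=; first exact: W_so _ _ _ _ sig Lg.
apply: semi_openU => c _; apply: semi_openI => //; first exact: W_so _ _ _ _ sig Lg.
by apply: semi_open_capn => // j _; exact: IH.
Qed.

Lemma G_mono L d h k k' : (k <= k')%N -> G L d h k `<=` G L d h k'.
Proof.
move=> kk; elim: d h => [|d IH] h /=; first exact: W_mono.
move=> x [c _ [Wx /capnP Cx]]; exists c => //; split => //.
by apply/capnP => j jc; apply: IH; exact: Cx.
Qed.

Lemma G_cov sigma L d h x : Lgood sigma L -> exists k, G L d h k x.
Proof.
move=> Lg; elim: d h => [|d IH] h /=; first exact: W_cov _ _ _ _ Lg.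
have [c Wc] := W_cov _ _ h x Lg.
suff [K HK] : exists K, forall j, (j < c)%N -> G L d (rcons h (R L h j)) K x.
  by exists K, c => //; split => //; apply/capnP.
elim: c {Wc} => [|c [K HK]]; first by exists 0%N.
have [k Hk] := IH (rcons h (R L h c)).
exists (maxn K k) => j; rewrite ltnS leq_eqVlt => /orP [/eqP ->|jc].
  by apply: G_mono Hk; exact: leq_maxr.
by apply: G_mono (HK _ jc); exact: leq_maxl.
Qed.

Fixpoint Hb L (b : nat -> nat) n : seq (seq (set X)) :=
  match n with 0 => [::] | n'.+1 => rcons (Hb L b n') (R L (Hb L b n') (b n')) end.

Lemma mkseq_Hb L b n : mkseq (fun i => R L (Hb L b i) (b i)) n = Hb L b n.
Proof.
elim: n => [|n IH] //=.
set f := fun i => _.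
have -> : mkseq f n.+1 = rcons (mkseq f n) (f n) by rewrite /mkseq -addn1 iotaD map_cat cats1.
by rewrite IH.
Qed.

Lemma key L b d : forall m k x, G L d (Hb L b m) k x ->
  (forall i, (m <= i < m + d)%N -> ~ W L (Hb L b i) (b i) x) -> W L (Hb L b (m + d)) k x.
Proof.
elim: d => [|d IH] m k x /=; first by rewrite addn0.
move=> [c _ [Wc /capnP Cx]] Hn.
have bc : (b m < c)%N.
  rewrite ltnNge; apply/negP => cb; apply: (Hn m); first by rewrite leqnn /= addnS ltnS leq_addr.
  exact: W_mono cb _ Wc.
rewrite -addSnnS; apply: IH; first exact: Cx.
move=> i /andP [mi id]; apply: Hn; rewrite -addSnnS id andbT.
exact: ltnW.
Qed.
End S.

Theorem mainTheorem1 (X : topologicalType) :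
  extremally_disconnected X -> semi_Menger X ->
  ~ exists sigma : alice_strategy X, alice_winning_strategy sigma.
Proof.
move=> ED SM [sigma [sig win]].
have [L Lg] : exists L, Lgood sigma L.
  have H : forall h, exists V : nat -> seq (set X),
      (forall n A, A \in V n -> sigma h A) /\
      \bigcup_n (\bigcup_(A in [set B | B \in V n]) A) = [set: X].
    move=> h; apply: SM => n; exact: sig.
  have [L HL] := choice H.
  by exists L; split => [h n A|h]; [exact: (proj1 (HL h))|exact: (proj2 (HL h))].
pose U (n : nat) := [set A | exists k, A = G L n [::] k].
have [Vs [VsU Vscov]] : exists V : nat -> seq (set X),
    (forall n A, A \in V n -> U n A) /\
    \bigcup_n (\bigcup_(A in [set B | B \in V n]) A) = [set: X].
  apply: SM => n; split.
    by move=> A [k ->]; exact: G_so.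
  apply/seteqP; split => // x _.
  have [k Hk] := G_cov _ _ n [::] x Lg.
  by exists (G L n [::] k) => //; exists k.
have HK : forall n, exists K, forall A, A \in Vs n -> A `<=` G L n [::] K.
  move=> n; elim: (Vs n) (VsU n) => [|A s IH] Hs; first by exists 0%N.
  have [K HK] := IH (fun B Bs => Hs B (@mem_behead _ (A :: s) B Bs)).
  have [k ->] := Hs A (mem_head _ _).
  exists (maxn K k) => B; rewrite in_cons => /orP [/eqP ->|Bs].
    by apply: G_mono; exact: leq_maxr.
  by move=> y /(HK _ Bs); apply: G_mono; exact: leq_maxl.
have [b Hb'] := choice HK.
pose V n := R L (Hb L b n) (b n).
apply: (win V).
  move=> n A; rewrite /V mkseq_Hb => /R_in [j].
  exact: (proj1 Lg).
apply/seteqP; split => // x _.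
apply: contrapT => NX.
have : [set: X] x by [].
rewrite -Vscov => -[n _ [A /= AV Ax]].
have Gx := Hb' n A AV x Ax.
have Wx : W L (Hb L b (0 + n)) (b n) x.
  apply: (key L b n 0 (b n) x Gx) => i _ [B /= BR Bx].
  by apply: NX; exists i => //; exists B.
rewrite add0n in Wx; case: Wx => B /= BR Bx.
by apply: NX; exists n => //; exists B.
Qed.
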